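(* Let $\hat g_{\ell,1},\hat g_{\ell,2}>0$ with $\hat g_{\ell,1}>\hat g_{\ell,2}$, let $\rho_\ell>0$, and let $R_{\rm sum}$ be a positive integer. Let $x^\star_\ell$ be the minimizer over $x\ge0$ of $\hat p_\ell(x)=\frac{(k_\ell+x)\hat g_{\ell,2}}{x+1}\exp\!\big(-\frac{x}{(x+1)^2}\beta_\ell\big)$, where $k_\ell=\hat g_{\ell,1}/\hat g_{\ell,2}$ and $\beta_\ell=R_{\rm sum}\rho_\ell$ (with $x^\star_\ell=\infty$ allowed). Define the beam allocation $$(r^\star_{\ell,1},r^\star_{\ell,2})=\begin{cases}\Big(\Big\lfloor\dfrac{R_{\rm sum}}{x^\star_\ell+1}\Big\rfloor,\Big\lfloor\dfrac{x^\star_\ell R_{\rm sum}}{x^\star_\ell+1}\Big\rfloor\Big), & \text{if } \dfrac{R_{\rm sum}}{x^\star_\ell+1}>1,\\[2mm] (1,R_{\rm sum}-1), & \text{if } \dfrac{R_{\rm sum}}{x^\star_\ell+1}\le 1.\end{cases}$$ Then $r^\star_{\ell,1}\le r^\star_{\ell,2}$.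
   Context: Setting: beam alignment with two beam candidates with prior probabilities $\hat g_{\ell,1},\hat g_{\ell,2}$ of being the optimal beam, repeated $r_{\ell,1},r_{\ell,2}$ times with $r_{\ell,1}+r_{\ell,2}\le R_{\rm sum}$, chosen to minimize the miss-determination bound $\frac{r_{\ell,1}\hat g_{\ell,1}+r_{\ell,2}\hat g_{\ell,2}}{R_{\rm sum}}\exp(-\frac{r_{\ell,1}r_{\ell,2}}{R_{\rm sum}}\rho_\ell)$; the displayed rounded allocation derived from the relaxed optimal ratio $x^\star_\ell=r_{\ell,2}/r_{\ell,1}$ is the paper's solution of this problem. It is known (Theorem 1 of the paper) that $x^\star_\ell>1$ when $\hat g_{\ell,1}>\hat g_{\ell,2}$. *)

(* Defs.v *)
From mathcomp Require Import all_boot all_order all_algebra.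
From mathcomp Require Import all_classical all_reals all_analysis.
Set Implicit Arguments. Unset Strict Implicit. Unset Printing Implicit Defensive.
Import Order.TTheory GRing.Theory Num.Theory.
Import numFieldNormedType.Exports.
Local Open Scope classical_set_scope.
Local Open Scope ring_scope.

Definition phat (R : realType) (g1 g2 beta : R) (x : R) : R :=
  ((g1 / g2) + x) * g2 / (x + 1) * expR (- (x / (x + 1) ^+ 2 * beta)).

Definition phat_ext (R : realType) (g1 g2 beta : R) (y : \bar R) : R :=
  match y with
  | EFin x => phat g1 g2 beta x
  | +oo%E => lim (phat g1 g2 beta x @[x --> +oo%R])
  | -oo%E => 0
  end.

Definition is_minimizer (R : realType) (g1 g2 beta : R) (xs : \bar R) : Prop :=
  (0 <= xs)%E /\
  forall y : \bar R, (0 <= y)%E -> phat_ext g1 g2 beta xs <= phat_ext g1 g2 beta y.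

(* the rounded allocation (r_1^star, r_2^star); for xs = +oo, Rsum/(xs+1) = 0 <= 1 *)
Definition alloc (R : realType) (Rsum : nat) (xs : \bar R) : int * int :=
  match xs with
  | EFin x =>
      if 1 < Rsum%:R / (x + 1)
      then (Num.floor (Rsum%:R / (x + 1)), Num.floor (x * Rsum%:R / (x + 1)))
      else (1%:Z, Rsum%:Z - 1)
  | _ => (1%:Z, Rsum%:Z - 1)
  end.

(* Main.v *)
Require Import Defs.
From mathcomp Require Import all_boot all_order all_algebra.
From mathcomp Require Import all_classical all_reals all_analysis.
From mathcomp Require Import ring lra zify.
Import Order.TTheory GRing.Theory Num.Theory.
Local Open Scope ring_scope.

Theorem corollary1 (R : realType) (g1 g2 rho : R) (Rsum : nat) (xs : \bar R) :
  0 < g1 -> 0 < g2 -> g2 < g1 -> 0 < rho -> (2 <= Rsum)%N ->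
  is_minimizer g1 g2 (Rsum%:R * rho) xs ->
  (alloc Rsum xs).1 <= (alloc Rsum xs).2.
Proof.
move=> g1p g2p g21 rp R2 [xs0 Hmin].
have Hel : 1%:Z <= Rsum%:Z - 1.
  have : 2%:Z <= Rsum%:Z by rewrite lez_nat.
  lia.
have bp : 0 < Rsum%:R * rho :> R.
  apply: mulr_gt0 => //; rewrite ltr0n; lia.
set beta := Rsum%:R * rho in Hmin bp.
case: xs xs0 Hmin => [x| |] xs0 Hmin /=; last by [].
  2: by [].
case: ifP => H /=; last by [].
have x0 : 0 <= x by rewrite -lee_fin.
suff x1 : 1 <= x.
  apply: le_floor.
  rewrite ler_pM2r ?invr_gt0; last lra.
  have Rp : 0 < Rsum%:R :> R by rewrite ltr0n; lia.
  nra.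
rewrite leNgt; apply/negP => x1.
case: (eqVneq x 0) => [x0e|xn0]; first subst x.
  have := Hmin 1%:E; rewrite lee_fin => /(_ ler01) /=.
  rewrite /phat.
  have -> : (g1/g2+0)*g2/(0+1)*expR(-(0/(0+1)^+2*beta)) = g1.
    by rewrite !mul0r oppr0 expR0 mulr1; field; lra.
  set e := expR _.
  have e1 : e < 1.
    rewrite expR_lt1 oppr_lt0; apply: mulr_gt0 => //; apply: divr_gt0 => //; apply: exprn_gt0; lra.
  have e0 : 0 < e := expR_gt0 _.
  have -> : (g1 / g2 + 1) * g2 / (1 + 1) * e = (g1 + g2) / 2 * e.
    by field; repeat (apply/andP; split); lra.
  apply/negP; rewrite -ltNge; nra.
have xp : 0 < x by rewrite lt_def xn0.
have := Hmin (x^-1)%:E; rewrite lee_fin invr_ge0 => /(_ x0) /=.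
rewrite /phat.
have -> : x^-1 / (x^-1 + 1) ^+ 2 * beta = x / (x + 1) ^+ 2 * beta.
  by field; repeat (apply/andP; split); lra.
set e := expR _.
have e0 : 0 < e := expR_gt0 _.
have -> : (g1 / g2 + x) * g2 / (x + 1) * e = (g1 + x * g2) / (x + 1) * e.
  by field; repeat (apply/andP; split); lra.
have -> : (g1 / g2 + x^-1) * g2 / (x^-1 + 1) * e = (g1 * x + g2) / (x + 1) * e.
  by field; repeat (apply/andP; split); lra.
apply/negP; rewrite -ltNge.
rewrite ltr_pM2r // ltr_pM2r ?invr_gt0; last lra.
nra.
Qed.
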